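(* Let $M$ be a matroid on $E$, $\mathfrak{S}\subseteq\mathcal{P}(E)$, and $S\in\mathfrak{S}$ such that $M|_S$ is disconnected, say $M|_S=\bigoplus_i M|_{S_i}$. Suppose that for every $T\in\mathfrak{S}$ with $T\subseteq S$, each connected component of $M|_T$ also belongs to $\mathfrak{S}$. Then $a_{\mathfrak{S}}(S)=0$.
   Context: A matroid is connected if it is not a direct sum of two matroids on nonempty ground sets; connected components are the ground sets of the summands in the decomposition into connected matroids. For $\mathfrak{T}\subseteq\mathcal{P}(E)$ and $T\in\mathfrak{T}$: $c(T)=\#T-\mathrm{rk}\,T$ and $a_{\mathfrak{T}}(T)=c(T)-\sum_{U\in\mathfrak{T},U\subsetneq T}a_{\mathfrak{T}}(U)$ recursively, with $a_{\mathfrak{T}}(\varnothing)=0$. *)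

(* Defs.v *)
From mathcomp Require Import all_boot all_order all_algebra.
Set Implicit Arguments. Unset Strict Implicit. Unset Printing Implicit Defensive.

Record matroid (E : finType) := Matroid {
  rk : {set E} -> nat;
  rk_le_card : forall X : {set E}, rk X <= #|X|;
  rk_mono : forall X Y : {set E}, X \subset Y -> rk X <= rk Y;
  rk_submod : forall X Y : {set E}, rk (X :|: Y) + rk (X :&: Y) <= rk X + rk Y
}.

Section MatroidDefs.
Variables (E : finType) (M : matroid E).

(* M|_S is the direct sum of the restrictions to the blocks of the partition P of S *)
Definition restr_direct_sum (S : {set E}) (P : {set {set E}}) : Prop :=
  partition P S /\
  forall X : {set E}, X \subset S -> rk M X = \sum_(B in P) rk M (X :&: B).

Definition restr_connected (S : {set E}) : Prop :=
  ~ exists A B : {set E},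
      [/\ A :|: B = S, A :&: B = set0, A != set0, B != set0 &
          forall X : {set E}, X \subset S ->
            rk M X = rk M (X :&: A) + rk M (X :&: B)].

Definition component (T C : {set E}) : Prop :=
  exists P : {set {set E}},
    [/\ restr_direct_sum T P, (forall B, B \in P -> restr_connected B) & C \in P].

Definition nullity (T : {set E}) : int := (#|T|%:Z - (rk M T)%:Z)%R.

(* a_T(T) = c(T) - sum_{U in Tf, U proper subset of T} a_T(U), a(empty) = 0,
   computed by recursion with fuel (any fuel > #|T| gives the same value). *)
Fixpoint a_fuel (Tf : {set {set E}}) (n : nat) (T : {set E}) : int :=
  match n with
  | 0 => 0%R
  | n'.+1 =>
      if T == set0 then 0%R
      else (nullity T - \sum_(U in Tf | U \proper T) a_fuel Tf n' U)%R
  end.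

Definition a_coef (Tf : {set {set E}}) (T : {set E}) : int :=
  a_fuel Tf #|T|.+1 T.

End MatroidDefs.

(* Main.v *)
Require Import Defs.
From mathcomp Require Import all_boot all_order all_algebra.
From Stdlib Require Import Classical.
Import GRing.Theory.

Section S.
Variables (E : finType) (M : matroid E).

Lemma rk0 : rk M set0 = 0.
Proof. by apply/eqP; rewrite -leqn0; have := rk_le_card M set0; rewrite cards0. Qed.

Lemma a_fuel_eq Sf n m (T : {set E}) : #|T| < n -> #|T| < m -> a_fuel M Sf n T = a_fuel M Sf m T.
Proof.
elim: n m T => [|n IH] [|m] T //= Hn Hm.
case: (T == set0) => //; congr (_ - _)%R.
apply: eq_bigr => U /andP[_ HU]; apply: IH.
  by apply: leq_trans (proper_card HU) _.
by apply: leq_trans (proper_card HU) _.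
Qed.

Lemma a_coef_unfold Sf (T : {set E}) : T != set0 ->
  a_coef M Sf T = (nullity M T - \sum_(U in Sf | U \proper T) a_coef M Sf U)%R.
Proof.
move=> HT; rewrite {1}/a_coef [in LHS]/= (negbTE HT); congr (_ - _)%R.
apply: eq_bigr => U /andP[_ HU]; rewrite /a_coef; apply: a_fuel_eq => //; exact: proper_card.
Qed.

Lemma a_coef0 (Sf : {set {set E}}) : a_coef M Sf set0 = 0%R.
Proof. by rewrite /a_coef /= eqxx. Qed.

Lemma nullity0 : nullity M set0 = 0%R.
Proof. by rewrite /nullity cards0 rk0 subrr. Qed.

Lemma sum_a (Sf : {set {set E}}) (T : {set E}) : T \in Sf ->
  (\sum_(U in Sf | U \subset T) a_coef M Sf U)%R = nullity M T.
Proof.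
move=> HT; have [->|T0] := eqVneq T set0.
  rewrite nullity0 big1 // => U /andP[_]; rewrite subset0 => /eqP ->.
  exact: a_coef0.
rewrite (bigD1 T) /=; last by rewrite HT subxx.
rewrite a_coef_unfold //.
rewrite -addrA [X in (_ + X)%R](_ : _ = 0%R) ?addr0 //; apply/eqP; rewrite addrC subr_eq0; apply/eqP.
by apply: eq_bigl => U; rewrite properEneq -andbA [(U \subset T) && _]andbC.
Qed.

Lemma decomp_ex (S : {set E}) : exists P : {set {set E}},
  restr_direct_sum M S P /\ forall B, B \in P -> restr_connected M B.
Proof.
move: {2}#|S| (leqnn #|S|) => n; elim: n S => [|n IH] S HS.
  have S0 : S = set0 by apply/eqP; rewrite -cards_eq0 -leqn0.
  exists set0; split; last by move=> B; rewrite inE.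
  split; first by rewrite S0 partition_set0.
  move=> X; rewrite S0 subset0 => /eqP ->; by rewrite big_set0 rk0.
have [->|S0] := eqVneq S set0.
  exists set0; split; last by move=> B; rewrite inE.
  split; first by rewrite partition_set0.
  move=> X; rewrite subset0 => /eqP ->; by rewrite big_set0 rk0.
have [Sc|Snc] := (classic (restr_connected M S)).
  exists [set S]; split; last by move=> B; rewrite inE => /eqP ->.
  split.
    by rewrite /partition cover1 eqxx trivIset1 inE eq_sym S0.
  by move=> X XS; rewrite big_set1; congr (rk M _); apply/esym/setIidPl.
move: Snc; rewrite /restr_connected => /NNPP [A [B [AB AB0 A0 B0 HAB]]].
have AS : A \subset S by rewrite -AB subsetUl.
have BS : B \subset S by rewrite -AB subsetUr.
have cardA : #|A| <= n.
  rewrite -ltnS; apply: leq_trans HS; apply: proper_card; rewrite properEneq AS andbT.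
  by apply/eqP => EA; move: B0; rewrite -AB0 EA (setIidPr BS) eqxx.
have cardB : #|B| <= n.
  rewrite -ltnS; apply: leq_trans HS; apply: proper_card; rewrite properEneq BS andbT.
  by apply/eqP => EB; move: A0; rewrite -AB0 EB (setIidPl AS) eqxx.
have [PA [[pA rA] cA]] := IH A cardA.
have [PB [[pB rB] cB]] := IH B cardB.
have dAB : [disjoint A & B] by rewrite -setI_eq0 AB0.
have dP : [disjoint PA & PB].
  apply/pred0P => C /=; apply/negP => /andP[CA CB].
  have CsA := partitionS pA CA; have CsB := partitionS pB CB.
  have := partition_neq0 pA CA; apply/negP; rewrite negbK.
  by rewrite -subset0 -AB0 subsetI CsA CsB.
exists (PA :|: PB); split; last by move=> C; rewrite inE => /orP[/cA|/cB].
split.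
  have cPA := cover_partition pA; have cPB := cover_partition pB.
  rewrite /partition {1}/cover bigcup_setU; rewrite /cover in cPA cPB; rewrite cPA cPB AB eqxx /=.
  rewrite inE (partition0 pA) (partition0 pB) andbT.
  by apply: trivIsetU (partition_trivIset pA) (partition_trivIset pB) _; rewrite /cover cPA cPB.
move=> X XS; rewrite HAB // (rA _ (subsetIr _ _)) (rB _ (subsetIr _ _)).
rewrite [in RHS](big_setID PA) setUK setDUl setDv set0U /=.
rewrite (_ : PB :\: PA = PB); last by apply/setDidPl; rewrite disjoint_sym.
congr (_ + _).
  apply: eq_bigr => C CA; congr (rk M _); rewrite -setIA; congr (_ :&: _); apply/setIidPr.
  exact: partitionS pA CA.
apply: eq_bigr => C CB; congr (rk M _); rewrite -setIA; congr (_ :&: _); apply/setIidPr.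
exact: partitionS pB CB.
Qed.

Lemma disconn (S : {set E}) (P : {set {set E}}) (U B0 : {set E}) : restr_direct_sum M S P -> U \subset S ->
  B0 \in P -> U :&: B0 != set0 -> ~~ (U \subset B0) -> ~ restr_connected M U.
Proof.
move=> [pP rP] US B0P nA nB; apply; exists (U :&: B0), (U :\: B0); split => //.
- exact: setID.
- by apply/setP => x; rewrite !inE; case: (x \in U); case: (x \in B0).
- by rewrite setD_eq0.
move=> X XU; have XS := subset_trans XU US.
rewrite (rP _ XS) (rP (X :&: (U :\: B0))); last by apply: subset_trans XS; exact: subsetIl.
rewrite (bigD1 B0) //= [in RHS](bigD1 B0) //=.
have -> : X :&: (U :\: B0) :&: B0 = set0.
  by apply/setP => x; rewrite !inE; case: (x \in B0); rewrite ?andbF.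
rewrite rk0 add0n setIA (setIidPl XU); congr (_ + _).
apply: eq_bigr => B /andP[BP BB0]; congr (rk M _).
have dis : [disjoint B & B0] by apply: (trivIsetP (partition_trivIset pP)) => //; rewrite eq_sym.
apply/setP => x; rewrite !inE.
case xB: (x \in B); rewrite ?andbF ?andbT //.
rewrite (disjointFr dis xB) /=.
by case xX: (x \in X) => //; rewrite (subsetP XU x xX).
Qed.
Lemma main_ind (Sf : {set {set E}}) n : forall S : {set E}, #|S| <= n ->
  S \in Sf -> ~ restr_connected M S ->
  (forall T : {set E}, T \in Sf -> T \subset S ->
     forall C : {set E}, component M T C -> C \in Sf) ->
  a_coef M Sf S = 0%R.
Proof.
elim: n => [|n IH] S HS SSf Snc Hcl.
  have S0 : S = set0 by apply/eqP; rewrite -cards_eq0 -leqn0.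
  rewrite S0; exact: a_coef0.
have S0 : S != set0.
  apply/eqP => S0; apply: Snc => -[A [B [AB _ A0 _ _]]].
  move: A0; rewrite -subset0 -S0 -AB subsetUl.
  by [].
have [P [[pP rP] cP]] := decomp_ex S.
have PSf : forall B, B \in P -> B \in Sf.
  by move=> B BP; apply: (Hcl S SSf (subxx _)); exists P.
have Pprop : forall B, B \in P -> B \proper S.
  move=> B BP; rewrite properEneq (partitionS pP BP) andbT.
  by apply/eqP => BS; apply: Snc; rewrite -BS; apply: cP.
rewrite a_coef_unfold //; apply/eqP; rewrite subr_eq0; apply/eqP.
have sumZ (F : {set E} -> nat) : ((\sum_(B in P) F B)%N%:Z = \sum_(B in P) (F B)%:Z)%R.
  exact: (big_morph Posz PoszD (erefl _)).
have -> : nullity M S = (\sum_(B in P) nullity M B)%R.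
  rewrite /nullity sumrB -!sumZ -(card_partition pP) (rP S (subxx _)).
  congr (_ - Posz _)%R; apply: eq_bigr => B BP; congr (rk M _).
  by apply/setIidPr; exact: partitionS pP BP.
transitivity (\sum_(B in P) \sum_(U in Sf | U \subset B) a_coef M Sf U)%R.
  by apply: eq_bigr => B BP; rewrite sum_a // PSf.
under eq_bigr do rewrite big_mkcondr /=.
rewrite exchange_big /= [RHS]big_mkcondr /=.
apply: eq_bigr => U USf.
have [Ha0|Ha0] := eqVneq (a_coef M Sf U) 0%R.
  by rewrite Ha0 if_same big1 // => B _; rewrite if_same.
have U0 : U != set0 by apply: contra_neq Ha0 => ->; exact: a_coef0.
case: (pickP (fun B0 => (B0 \in P) && (U \subset B0))) => [B0 /andP[B0P UB0] | none].
  rewrite (bigD1 B0) //= UB0 big1 ?addr0.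
    by rewrite (sub_proper_trans UB0 (Pprop _ B0P)).
  move=> B /andP[BP BB0]; case: ifP => // UB.
  have dis : [disjoint B & B0] by apply: (trivIsetP (partition_trivIset pP)).
  move: U0; case/set0Pn => x xU.
  by move: (disjointFr dis (subsetP UB x xU)); rewrite (subsetP UB0 x xU).
rewrite big1; last by move=> B BP; move: (none B); rewrite BP /= => ->.
case: ifP => // US; apply/esym.
have USs := proper_sub US.
apply: (IH U) => //.
- by rewrite -ltnS; apply: leq_trans HS; exact: proper_card.
- case/set0Pn: U0 => x xU.
  have xS : x \in cover P by rewrite (cover_partition pP) (subsetP USs x xU).
  have H1 : U :&: pblock P x != set0.
    by apply/set0Pn; exists x; rewrite inE xU mem_pblock.
  have H2 : ~~ (U \subset pblock P x).
    by move: (none (pblock P x)); rewrite (pblock_mem xS) => /= ->.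
  exact: (@disconn S P U (pblock P x) (conj pP rP) USs (pblock_mem xS) H1 H2).
- by move=> T TSf TU; apply: Hcl => //; exact: subset_trans TU USs.
Qed.
End S.

Theorem proposition6p5 (E : finType) (M : matroid E) (Sf : {set {set E}})
    (S : {set E}) :
  S \in Sf ->
  ~ restr_connected M S ->
  (forall T : {set E}, T \in Sf -> T \subset S ->
     forall C : {set E}, component M T C -> C \in Sf) ->
  a_coef M Sf S = 0%R.
Proof.
move=> H1 H2 H3; exact: (@main_ind E M Sf #|S| S (leqnn _) H1 H2 H3). Qed.
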